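(* Let $p\ge 1$, let $n_1,\dots,n_p\ge1$ and $k_s\in[n_s]$ for each $s$. If $\mathcal{F}\subseteq\prod_{s}\binom{[n_s]}{k_s}$ is intersecting and shifted, then $P(F)\cap P(G)\neq\emptyset$ for any $F,G\in \mathcal{F}$.
   Context: Multi-part setting: the ground set is the disjoint union $\bigsqcup_{s=1}^p [n_s]$ of $p$ parts, $[n]=\{1,\dots,n\}$. For $F_s\subseteq[n_s]$, $\bigsqcup_s F_s$ denotes the subset having $F_s$ in part $s$; $\prod_{s}\binom{[n_s]}{k_s}$ is the collection of all $\bigsqcup_s F_s$ with $|F_s|=k_s$ for all $s$. A family is intersecting if any two of its sets intersect (in some part). Shifting: for $t\in[p]$, $1\le i<j\le n_t$ and $F=\bigsqcup_s F_s$, $S_t^{i,j}(F)=F$ if $i\in F_t$ or $j\notin F_t$, and otherwise $S_t^{i,j}(F)$ replaces $F_t$ by $(F_t\setminus\{j\})\cup\{i\}$. For a family, $S_t^{i,j}(\mathcal F)=\{S_t^{i,j}(F):F\in\mathcal F\}\cup\{F: F\in\mathcal F,\ S_t^{i,j}(F)\in\mathcal F\}$. $\mathcal F$ is shifted if $S_t^{i,j}(\mathcal F)=\mathcal F$ for all $t\in[p]$ and all $1\le i<j\le n_t$. Projection: for $F=\bigsqcup_s F_s$, let $P_s(F)=F_s\cap[2k_s]$ and $P(F)=\bigsqcup_s P_s(F)$ (the first $2k_s$ elements of each part $s$ that lie in $F$). *)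

(* Defs.v *)
From mathcomp Require Import all_boot.
Set Implicit Arguments. Unset Strict Implicit. Unset Printing Implicit Defensive.

(* Ground set: disjoint union of p parts; part s is [n_s] = {1..n_s},
   represented 0-indexed by 'I_(n s): the ordinal x stands for x+1. *)
Definition elt (p : nat) (n : 'I_p -> nat) : finType :=
  {s : 'I_p & 'I_(n s)}.

Definition mk (p : nat) (n : 'I_p -> nat) (s : 'I_p) (x : 'I_(n s)) : elt n :=
  @Tagged 'I_p s (fun s => 'I_(n s)) x.

Definition part (p : nat) (n : 'I_p -> nat) (F : {set elt n}) (s : 'I_p)
  : {set 'I_(n s)} := [set x : 'I_(n s) | mk x \in F].

Definition in_prod (p : nat) (n k : 'I_p -> nat) (F : {set elt n}) : bool :=
  [forall s : 'I_p, #|part F s| == k s].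

Definition intersecting (p : nat) (n : 'I_p -> nat) (Fam : {set {set elt n}}) :=
  forall F G, F \in Fam -> G \in Fam -> F :&: G != set0.

Definition shift1 (p : nat) (n : 'I_p -> nat) (t : 'I_p) (i j : 'I_(n t))
  (F : {set elt n}) : {set elt n} :=
  if (i \in part F t) || (j \notin part F t) then F
  else (F :\ mk j) :|: [set mk i].

Definition shiftFam (p : nat) (n : 'I_p -> nat) (t : 'I_p) (i j : 'I_(n t))
  (Fam : {set {set elt n}}) : {set {set elt n}} :=
  [set shift1 i j F | F in Fam] :|: [set F in Fam | shift1 i j F \in Fam].

Definition shifted (p : nat) (n : 'I_p -> nat) (Fam : {set {set elt n}}) :=
  forall (t : 'I_p) (i j : 'I_(n t)), (i < j)%N -> shiftFam i j Fam = Fam.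

(* P(F): keep in part s only the first 2 k_s elements, i.e. values
   1..2k_s, i.e. 0-indexed ordinals < 2 k_s. *)
Definition proj (p : nat) (n k : 'I_p -> nat) (F : {set elt n}) : {set elt n} :=
  [set x in F | (val (tagged x) < 2 * k (tag x))%N].

(* Main.v *)
Require Import Defs.
From mathcomp Require Import all_boot.
From mathcomp Require Import zify.

Theorem lemma3p1 (p : nat) (n k : 'I_p -> nat) (Fam : {set {set elt n}}) :
  (1 <= p)%N ->
  (forall s, 1 <= n s)%N ->
  (forall s, 1 <= k s <= n s)%N ->
  (forall F, F \in Fam -> in_prod k F) ->
  intersecting Fam ->
  shifted Fam ->
  forall F G, F \in Fam -> G \in Fam -> proj k F :&: proj k G != set0.
Proof.
move=> _ _ _ Hprod Hint Hsh F G.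
move: {2}#|F :&: G| (leqnn #|F :&: G|) => m.
elim: m F G => [|m IH] F G Hm HF HG.
  have := Hint F G HF HG.
  by rewrite -card_gt0 => H; move: (leq_trans H Hm).
apply/negP => /eqP H0.
have /set0Pn [[s x0] Hx] := Hint F G HF HG.
have HxF : mk x0 \in F by move: Hx; rewrite inE => /andP [].
have HxG : mk x0 \in G by move: Hx; rewrite inE => /andP [].
have Hx0 : (2 * k s <= x0)%N.
  rewrite leqNgt; apply/negP => Hlt.
  have : mk x0 \in proj k F :&: proj k G by rewrite !inE HxF HxG /= Hlt.
  by rewrite H0 inE.
set A := [set z : 'I_(n s) | (z < 2 * k s)%N].
have le2 : (2 * k s <= n s)%N by apply: leq_trans (ltnW (ltn_ord x0)).
have cardA : (2 * k s <= #|A|)%N.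
  have <- : #|widen_ord le2 @: [set: 'I_(2 * k s)]| = (2 * k s)%N.
    rewrite card_imset ?cardsT ?card_ord //. move=> a b H; apply/val_inj; exact: (congr1 val H).
  apply: subset_leq_card; apply/subsetP => z /imsetP [w _ ->].
  by rewrite inE /= ltn_ord.
set Fs := part F s :&: A.
set Gs := part G s :&: A.
have cFs : (#|Fs| < k s)%N.
  have := Hprod F HF => /forallP /(_ s) /eqP <-.
  apply: proper_card; apply/properP; split; first exact: subsetIl.
  exists x0; first by rewrite inE HxF.
  by rewrite !inE ltnNge Hx0 andbF.
have cGs : (#|Gs| < k s)%N.
  have := Hprod G HG => /forallP /(_ s) /eqP <-.
  apply: proper_card; apply/properP; split; first exact: subsetIl.
  exists x0; first by rewrite inE HxG.
  by rewrite !inE ltnNge Hx0 andbF.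
have : ~~ (A \subset Fs :|: Gs).
  apply/negP => /subset_leq_card Hc.
  have := leq_trans Hc (leq_card_setU Fs Gs).
  move=> Hc2; have := leq_trans cardA Hc2.
  move: cFs cGs; lia.
case/subsetPn => y HyA HyFG.
have Hy : (y < 2 * k s)%N by move: HyA; rewrite inE.
have HyF : mk y \notin F.
  by apply/negP => H; move/negP: HyFG; apply; rewrite inE; apply/orP; left; rewrite inE HyA andbT inE H.
have HyG : mk y \notin G.
  by apply/negP => H; move/negP: HyFG; apply; rewrite inE; apply/orP; right; rewrite inE HyA andbT inE H.
have Hyx : (y < x0)%N by apply: leq_trans Hy Hx0.
set G' := shift1 y x0 G.
have HG' : G' = (G :\ mk x0) :|: [set mk y].
  by rewrite /G' /shift1 !inE (negbTE HyG) HxG.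
have HG'F : G' \in Fam.
  by rewrite -(Hsh s y x0 Hyx) /shiftFam inE; apply/orP; left; apply/imsetP; exists G.
have Hc : (#|F :&: G'| <= m)%N; last first.
  move: (IH F G' Hc HF HG'F) => /negP; apply.
  apply/eqP/setP => z; rewrite inE [RHS]inE.
  apply/negP => /andP [].
  rewrite !inE HG' !inE => /andP [zF zl] /andP [/orP [/andP [_ zG] | /eqP zy] _].
  - have : z \in proj k F :&: proj k G by rewrite !inE zF zG zl.
    by rewrite H0 inE.
  - by move: zF; rewrite zy (negbTE HyF).
rewrite -ltnS; apply: leq_trans Hm.
apply: proper_card; apply/properP; split.
  apply/subsetP => z; rewrite !inE HG' !inE => /andP [zF /orP [/andP [_ zG] | /eqP zy]].
  - by rewrite zF zG.
  - by move: zF; rewrite zy (negbTE HyF).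
exists (mk x0); first by rewrite inE HxF HxG.
rewrite inE negb_and HG' !inE eqxx /=; apply/orP; right.
by apply/negP => /eqP e; move: HxF; rewrite e (negbTE HyF).
Qed.
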